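(* Let $f,\beta_{(-1)},\beta_{(0)},\beta_{(1)}\in\mathbb{C}[x]$ be nonzero polynomials satisfying \[ f(x+1)\beta_{(1)}(x)+f(x)\beta_{(0)}(x)+f(x-1)\beta_{(-1)}(x)=0. \] Let $d_{f}=\deg(f)$, $d=\max\{\deg(\beta_{(i)}) : i=-1,0,1\}$, and write $\beta_{(i)}(x)=\sum_{j=0}^{d}\beta_{(i)}^{(j)}x^{j}$ with $\beta_{(i)}^{(j)}\in\mathbb{C}$ (with the convention $\beta_{(i)}^{(j)}=0$ for $j<0$). Then: (1) $\beta_{(-1)}^{(d)}+\beta_{(0)}^{(d)}+\beta_{(1)}^{(d)}=0$; in particular at least two of the $\beta_{(i)}$ have degree $d$. (2) If $\beta_{(-1)}^{(d)}-\beta_{(1)}^{(d)}\neq0$, then \[ d_{f}=\frac{\beta_{(-1)}^{(d-1)}+\beta_{(0)}^{(d-1)}+\beta_{(1)}^{(d-1)}}{\beta_{(-1)}^{(d)}-\beta_{(1)}^{(d)}}; \] in particular this expression is a (nonnegative) integer. (3) If $\beta_{(-1)}^{(d)}-\beta_{(1)}^{(d)}=0$, then $\beta_{(-1)}^{(d)}+\beta_{(1)}^{(d)}\neq0$ and \[ \left(\beta_{(-1)}^{(d-2)}+\beta_{(0)}^{(d-2)}+\beta_{(1)}^{(d-2)}\right)+d_{f}\left(-\beta_{(-1)}^{(d-1)}+\beta_{(1)}^{(d-1)}\right)+\binom{d_{f}}{2}\left(\beta_{(-1)}^{(d)}+\beta_{(1)}^{(d)}\right)=0, \] which is a nontrivial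 quadratic equation in $d_{f}$. *)

(* Defs.v *)
From mathcomp Require Import all_boot all_algebra.
From mathcomp Require Import complex.
From mathcomp Require Import Rstruct.
Set Implicit Arguments. Unset Strict Implicit. Unset Printing Implicit Defensive.
Import GRing.Theory Num.Theory.
Local Open Scope ring_scope.

Definition CC : numClosedFieldType := (Rdefinitions.R)[i].

(* Degree of a polynomial (deg 0 = 0 by convention, irrelevant here). *)
Definition deg (p : {poly CC}) : nat := (size p).-1.

Definition coefz (p : {poly CC}) (j : int) : CC :=
  match j with Posz n => p`_n | Negz _ => 0 end.

Definition shift (p : {poly CC}) (c : CC) : {poly CC} := p \Po ('X + c%:P).

(* Main.v *)
Require Import Defs.
From mathcomp Require Import all_boot all_algebra.
From mathcomp Require Import complex.
From mathcomp Require Import Rstruct.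
From mathcomp Require Import ring zify.
Set Implicit Arguments. Unset Strict Implicit. Unset Printing Implicit Defensive.
Import GRing.Theory Num.Theory.
Local Open Scope ring_scope.

Lemma coefzD p q i : coefz (p + q) i = coefz p i + coefz q i.
Proof. by case: i => n /=; rewrite ?coefD ?addr0. Qed.

Lemma coefz0 i : coefz 0 i = 0.
Proof. by case: i => //= n; rewrite coef0. Qed.

Lemma coefXnMz k p m : ('X^k * p)`_m = coefz p (m%:Z - k%:Z).
Proof.
rewrite coefXnM; case: ltnP => h; case E: (m%:Z - k%:Z) => [j|j] //=.
- exfalso; lia.
- by have -> : j = (m - k)%N by lia.
- exfalso; rewrite NegzE in E; lia.
Qed.

Lemma topM (p q : {poly CC}) N M k : (k <= N)%N -> (k <= M)%N -> (size p <= N.+1)%N -> (size q <= M.+1)%N ->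
  (p * q)`_(N + M - k) = \sum_(t < k.+1) p`_(N - k + t) * q`_(M - t).
Proof.
move=> kN kM sp sq.
rewrite coefM -(big_mkord xpredT (fun j => p`_j * q`_(N + M - k - j))).
rewrite (big_cat_nat _ (n := N - k)) //=; last lia.
rewrite (big_cat_nat _ (m := N - k) (n := N.+1)) //=; last lia; last lia.
rewrite big1_seq; last first.
  move=> j /andP[_]; rewrite mem_index_iota => /andP[_ hj].
  by rewrite (nth_default _ (leq_trans sq _)) ?mulr0 //; lia.
rewrite add0r [X in _ + X]big1_seq ?addr0; last first.
  move=> j /andP[_]; rewrite mem_index_iota => /andP[hj _].
  by rewrite (nth_default _ (leq_trans sp _)) ?mul0r.
rewrite -{1}(add0n (N - k)%N) big_addn big_mkord.
have -> : (N.+1 - (N - k))%N = k.+1 by lia.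
apply: eq_bigr => t _; congr (p`_ _ * q`_ _); have := ltn_ord t; lia.
Qed.

Lemma coefz_idx p i j : i = j -> coefz p i = coefz p j.
Proof. by move->. Qed.

Lemma topMz (p q : {poly CC}) N M : (size p <= N.+1)%N -> (size q <= M.+1)%N ->
 [/\ coefz (p*q) (N+M)%N = coefz p N * coefz q M,
     coefz (p*q) ((N+M)%N%:Z - 1) = coefz p (N%:Z - 1) * coefz q M + coefz p N * coefz q (M%:Z - 1)
   & coefz (p*q) ((N+M)%N%:Z - 2) = coefz p (N%:Z-2) * coefz q M + coefz p (N%:Z-1) * coefz q (M%:Z-1) + coefz p N * coefz q (M%:Z-2)].
Proof.
move=> sp sq.
have sX : size ('X^2 : {poly CC}) = 3%N by rewrite size_polyXn.
have sP : (size ('X^2 * p)%R <= (N + 2).+1)%N.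
  apply: leq_trans (size_mul_leq _ _) _; rewrite sX; lia.
have sQ : (size ('X^2 * q)%R <= (M + 2).+1)%N.
  apply: leq_trans (size_mul_leq _ _) _; rewrite sX; lia.
have E : ('X^2 * p) * ('X^2 * q) = 'X^4 * (p * q).
  by rewrite mulrACA -exprD.
have key k : (k <= 2)%N -> coefz (p * q) ((N + 2 + (M + 2) - k)%N%:Z - 4%:Z) =
   \sum_(t < k.+1) coefz p ((N + 2 - k + t)%N%:Z - 2%:Z) * coefz q ((M + 2 - t)%N%:Z - 2%:Z).
  move=> hk; rewrite -coefXnMz -E topM //; try lia.
  by apply: eq_bigr => t _; rewrite !coefXnMz.
split.
- have H := key 0%N isT; rewrite big_ord_recr big_ord0 /= add0r in H.
  rewrite [X in coefz (p * q) X](_ : _ = ((N + 2 + (M + 2) - 0)%N%:Z - 4%:Z)); last lia.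
  rewrite H.
  by congr (_ * _); apply: coefz_idx; lia.
- have H := key 1%N isT; rewrite !big_ord_recr big_ord0 /= add0r in H.
  rewrite [X in coefz (p * q) X](_ : _ = ((N + 2 + (M + 2) - 1)%N%:Z - 4%:Z)); last lia.
  rewrite H.
  by congr (_ * _ + _ * _); apply: coefz_idx; lia.
- have H := key 2%N isT; rewrite !big_ord_recr big_ord0 /= add0r in H.
  rewrite [X in coefz (p * q) X](_ : _ = ((N + 2 + (M + 2) - 2)%N%:Z - 4%:Z)); last lia.
  rewrite H.
  by congr (_ * _ + _ * _ + _ * _); apply: coefz_idx; lia.
Qed.

Lemma shift_taylor (f : {poly CC}) c : shift f c = \sum_(i < size f) f^`N(i) * (c ^+ i)%:P.
Proof.
rewrite /shift /comp_poly (nderiv_taylor _ (mulrC _ _)) size_map_polyC.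
apply: eq_bigr => i _; rewrite nderivn_map rmorphXn /=.
by have := comp_polyXr (f^`N(i)); rewrite /comp_poly => ->.
Qed.

Lemma coef_shift (f : {poly CC}) c m K : (size f <= m + K)%N ->
  (shift f c)`_m = \sum_(i < K) f`_(i + m) *+ 'C(i + m, i) * c ^+ i.
Proof.
move=> hK; rewrite shift_taylor coef_sum.
set g := fun i : nat => f`_(i + m) *+ 'C(i + m, i) * c ^+ i.
have gz i : (size f <= i + m)%N -> g i = 0.
  by move=> h; rewrite /g nth_default // mul0rn mul0r.
have wid n : (forall i, (n <= i)%N -> (size f <= i + m)%N) -> (n <= size f + K)%N ->
    \sum_(i < n) g i = \sum_(i < size f + K) g i.
  move=> h hn; rewrite (big_ord_widen _ g hn) big_mkcond; apply: eq_bigr => i _.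
  by case: ltnP => // /h /gz ->.
transitivity (\sum_(i < size f) g i).
  by apply: eq_bigr => i _; rewrite coefMC coef_nderivn.
rewrite (wid (size f)) ?(wid K) //; try lia.
Qed.

Lemma shiftz (f : {poly CC}) c n : (size f <= n.+1)%N ->
 [/\ coefz (shift f c) n = coefz f n,
     coefz (shift f c) (n%:Z - 1) = coefz f (n%:Z - 1) + c * n%:R * coefz f n
   & coefz (shift f c) (n%:Z - 2) = coefz f (n%:Z - 2) + c * (n%:R - 1) * coefz f (n%:Z - 1)
        + c ^+ 2 * 'C(n, 2)%:R * coefz f n].
Proof.
move=> sf; split.
- rewrite /= (coef_shift c (K := 1)) ?addn1 // big_ord_recr big_ord0 /=.
  by rewrite add0r add0n bin0 mulr1.
- case: n sf => [|n] sf; first by rewrite /= mulr0 mul0r addr0.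
  rewrite (_ : n.+1%:Z - 1 = n) /=; last lia.
  rewrite (coef_shift c (K := 2)) ?addn2 // !big_ord_recr big_ord0 /=.
  rewrite add0r add0n bin0 add1n bin1 expr1 expr0 mulr1 mulr1n.
  by rewrite -mulr_natr; ring.
- case: n sf => [|[|n]] sf.
  + rewrite (_ : 0%:Z - 2 = Negz 1) // (_ : 0%:Z - 1 = Negz 0) //=.
    by rewrite bin_small //; ring.
  + rewrite (_ : 1%:Z - 2 = Negz 0) // (_ : 1%:Z - 1 = 0) //=.
    by rewrite bin_small //; ring.
  rewrite (_ : n.+2%:Z - 2 = n); last lia.
  rewrite (_ : n.+2%:Z - 1 = n.+1) /=; last lia.
  rewrite (coef_shift c (K := 3)) ?addn3 // !big_ord_recr big_ord0 /=.
  rewrite add0r add0n bin0 !addSn add0n bin1 expr1 expr0 mulr1 mulr1n.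
  have -> : (n.+2)%:R - 1 = (n.+1)%:R :> CC by rewrite mulrSr addrK.
  by rewrite -[f`_n.+1 *+ _]mulr_natr -[f`_n.+2 *+ _]mulr_natr; ring.
Qed.

Lemma two_nz (x y z : CC) : x + y + z = 0 -> [|| x != 0, y != 0 | z != 0] ->
  [|| (x != 0) && (y != 0), (x != 0) && (z != 0) | (y != 0) && (z != 0)].
Proof.
case: (eqVneq x 0) => [->|hx]; case: (eqVneq y 0) => [->|hy];
  case: (eqVneq z 0) => [->|hz] //=; rewrite ?add0r ?addr0 => h; exfalso.
- by move: hz; rewrite h eqxx.
- by move: hy; rewrite h eqxx.
- by move: hx; rewrite h eqxx.
Qed.

Lemma coefnz (b : {poly CC}) d : b != 0 -> (deg b <= d)%N -> (coefz b d != 0) = (deg b == d).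
Proof.
move=> nz hd /=; case: (eqVneq (deg b) d) => [e|ne].
  by rewrite -e /deg -lead_coefE lead_coef_eq0 nz.
rewrite nth_default ?eqxx //; move/eqP: ne; move: hd; rewrite /deg; case: (size b) => [|s] /=; lia.
Qed.

Theorem lemma29 (f bm b0 bp : {poly CC}) :
  f != 0 -> bm != 0 -> b0 != 0 -> bp != 0 ->
  shift f 1 * bp + f * b0 + shift f (-1) * bm = 0 ->
  let df := deg f in
  let d : nat := maxn (deg bm) (maxn (deg b0) (deg bp)) in
  [/\ (coefz bm d + coefz b0 d + coefz bp d = 0
       /\ [|| (deg bm == d) && (deg b0 == d),
              (deg bm == d) && (deg bp == d) | (deg b0 == d) && (deg bp == d)]),
      (coefz bm d - coefz bp d != 0 ->
         df%:R = (coefz bm (d%:Z - 1) + coefz b0 (d%:Z - 1) + coefz bp (d%:Z - 1))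
                 / (coefz bm d - coefz bp d))
    & (coefz bm d - coefz bp d = 0 ->
         coefz bm d + coefz bp d != 0 /\
         (coefz bm (d%:Z - 2) + coefz b0 (d%:Z - 2) + coefz bp (d%:Z - 2))
           + df%:R * (- coefz bm (d%:Z - 1) + coefz bp (d%:Z - 1))
           + ('C(df, 2))%:R * (coefz bm d + coefz bp d) = 0)].
Proof.
move=> nf nm n0 np Heq df d.
have sf : size f = df.+1 by rewrite /df /deg prednK // size_poly_gt0.
have hsh c : (size (shift f c) <= df.+1)%N by rewrite /shift size_comp_poly2 ?size_XaddC ?sf.
have hf : (size f <= df.+1)%N by rewrite sf.
have a0nz : coefz f df != 0.
  by rewrite /= (_ : df = (size f).-1) ?sf // -lead_coefE lead_coef_eq0.
have hdm : (deg bm <= d)%N by rewrite /d; lia.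
have hd0 : (deg b0 <= d)%N by rewrite /d; lia.
have hdp : (deg bp <= d)%N by rewrite /d; lia.
have sz p : (deg p <= d)%N -> (size p <= d.+1)%N.
  by move=> h; apply: leq_trans (leqSpred _) _; rewrite ltnS.
have one : [|| deg bm == d, deg b0 == d | deg bp == d] by rewrite /d; lia.
case: (topMz (hsh 1) (sz _ hdp)) => P0 P1 P2.
case: (topMz hf (sz _ hd0)) => Q0 Q1 Q2.
case: (topMz (hsh (-1)) (sz _ hdm)) => R0 R1 R2.
case: (shiftz 1 hf) => S0 S1 S2.
case: (shiftz (-1) hf) => T0 T1 T2.
have E0 : coefz (shift f 1 * bp + f * b0 + shift f (-1) * bm) (df + d)%N = 0 by rewrite Heq coefz0.
have E1 : coefz (shift f 1 * bp + f * b0 + shift f (-1) * bm) ((df + d)%N%:Z - 1) = 0 by rewrite Heq coefz0.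
have E2 : coefz (shift f 1 * bp + f * b0 + shift f (-1) * bm) ((df + d)%N%:Z - 2) = 0 by rewrite Heq coefz0.
rewrite !coefzD P0 Q0 R0 S0 T0 in E0.
rewrite !coefzD P1 Q1 R1 S0 T0 S1 T1 in E1.
rewrite !coefzD P2 Q2 R2 S0 T0 S1 T1 S2 T2 in E2.
rewrite -(coefnz nm hdm) -(coefnz n0 hd0) -(coefnz np hdp) in one *.
move: a0nz E0 E1 E2 one.
set a0 := coefz f df; set a1 := coefz f (df%:Z - 1); set a2 := coefz f (df%:Z - 2).
set m0 := coefz bm d; set m1 := coefz bm (d%:Z - 1); set m2 := coefz bm (d%:Z - 2).
set z0 := coefz b0 d; set z1 := coefz b0 (d%:Z - 1); set z2 := coefz b0 (d%:Z - 2).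
set p0 := coefz bp d; set p1 := coefz bp (d%:Z - 1); set p2 := coefz bp (d%:Z - 2).
move=> a0nz E0 E1 E2 one.
have H0 : m0 + z0 + p0 = 0.
  have : a0 * (m0 + z0 + p0) = 0 by apply: etrans E0; ring.
  by move/eqP; rewrite mulf_eq0 (negPf a0nz) /= => /eqP.
have H1 : (m1 + z1 + p1) + df%:R * (p0 - m0) = 0.
  have : a0 * ((m1 + z1 + p1) + df%:R * (p0 - m0)) + a1 * (m0 + z0 + p0) = 0.
    by apply: etrans E1; ring.
  by rewrite H0 mulr0 addr0 => /eqP; rewrite mulf_eq0 (negPf a0nz) /= => /eqP.
split.
- by split=> //; apply: two_nz.
- move=> hne.
  have -> : m1 + z1 + p1 = df%:R * (m0 - p0).
    by apply/eqP; rewrite -subr_eq0 -[X in _ == X]H1; apply/eqP; ring.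
  by rewrite mulfK.
- move=> heq; have mp : m0 = p0 by apply/eqP; rewrite -subr_eq0 heq.
  split.
    apply/negP => /eqP h; move: one.
    have p00 : p0 = 0.
      have : p0 *+ 2 == 0 by rewrite mulr2n -{1}mp h.
      by rewrite mulrn_eq0 /= => /eqP.
    have z00 : z0 = 0 by move: H0; rewrite mp p00 !addr0 add0r.
    by rewrite mp p00 z00 eqxx.
  have : a0 * ((m2 + z2 + p2) + df%:R * (- m1 + p1) + ('C(df, 2))%:R * (m0 + p0))
      + a2 * (m0 + z0 + p0) + a1 * ((m1 + z1 + p1) + df%:R * (p0 - m0)) - a1 * (p0 - m0) = 0.
    by apply: etrans E2; ring.
  rewrite H0 H1 mp subrr !mulr0 !addr0 subr0 => /eqP.
  by rewrite mulf_eq0 (negPf a0nz) /= => /eqP.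
Qed.
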